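(* Endow $\mathbb{R}^{t+1}$ with the inner product $(x,y)=\sum_{i=1}^{t+1}b^ix_iy_i$, where $b^1,\dots,b^{t+1}$ are positive integers, and let $\overline{\mathcal C}=\{x\in\mathbb{R}^{t+1}:x_1\le\cdots\le x_{t+1}\}$. Let $v\in\mathbb{R}^{t+1}\setminus\{0\}$ with $\sum_i v_ib^i=0$, and define $\mu_v(\Gamma)=(\Gamma,v)/\|\Gamma\|$ on $\overline{\mathcal C}\setminus\{0\}$. Assume some $\Gamma\in\overline{\mathcal C}$ has $\mu_v(\Gamma)>0$. Let $b_0=0$, $b_i=b^1+\dots+b^i$, $w_0=0$, $w_i=-\sum_{k\le i}b^kv_k$ (so $w_{t+1}=0$), let $(b_i,\widetilde w_i)$ be the points of the convex envelope (least concave majorant) of the piecewise linear graph through the points $(b_i,w_i)$, $i=0,\dots,t+1$, and define $\Gamma_v=(\Gamma_1,\dots,\Gamma_{t+1})$ by $\Gamma_i=-(\widetilde w_i-\widetilde w_{i-1})/b^i$. Then $\Gamma_v\in\overline{\mathcal C}\setminus\{0\}$ and $\Gamma_v$ attains the maximum of $\mu_v$ on $\overline{\mathcal C}\setminus\{0\}$. *)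

(* Defs.v *)
(* R : realType, vectors in R^(t+1) are 'rV[R]_(t.+1),
   index i : 'I_(t.+1) (0-based) corresponds to the paper's index i+1. *)
From HB Require Import structures.
From mathcomp Require Import all_boot all_order all_algebra.
From mathcomp Require Import reals.
Set Implicit Arguments. Unset Strict Implicit. Unset Printing Implicit Defensive.
Import Order.TTheory GRing.Theory Num.Theory.
Local Open Scope ring_scope.

Section Defs.
Variables (R : realType) (t : nat) (b : 'I_t.+1 -> nat).

Definition wip (x y : 'rV[R]_t.+1) : R :=
  \sum_(i < t.+1) (b i)%:R * x ord0 i * y ord0 i.

Definition wnorm (x : 'rV[R]_t.+1) : R := Num.sqrt (wip x x).

Definition Cbar (x : 'rV[R]_t.+1) : Prop :=
  forall i j : 'I_t.+1, (i <= j)%N -> x ord0 i <= x ord0 j.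

Definition mu (v G : 'rV[R]_t.+1) : R := wip G v / wnorm G.

Definition bsum (k : nat) : R := (\sum_(i < t.+1 | (i < k)%N) b i)%:R.

Definition wpt (v : 'rV[R]_t.+1) (k : nat) : R :=
  - \sum_(i < t.+1 | (i < k)%N) (b i)%:R * v ord0 i.

Definition majorizes_graph (v : 'rV[R]_t.+1) (f : R -> R) : Prop :=
  forall (k : 'I_t.+1) (x : R), bsum k <= x -> x <= bsum k.+1 ->
    wpt v k + (x - bsum k) / (b k)%:R * (wpt v k.+1 - wpt v k) <= f x.

Definition concave_on (a c : R) (f : R -> R) : Prop :=
  forall x y l : R, a <= x -> x <= c -> a <= y -> y <= c -> 0 <= l -> l <= 1 ->
    l * f x + (1 - l) * f y <= f (l * x + (1 - l) * y).

Definition least_concave_majorant (v : 'rV[R]_t.+1) (f : R -> R) : Prop :=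
  [/\ concave_on 0 (bsum t.+1) f, majorizes_graph v f &
      forall g : R -> R, concave_on 0 (bsum t.+1) g -> majorizes_graph v g ->
        forall x, 0 <= x -> x <= bsum t.+1 -> f x <= g x].

Definition Gamma_v (f : R -> R) : 'rV[R]_t.+1 :=
  \row_(i < t.+1) (- (f (bsum i.+1) - f (bsum i)) / (b i)%:R).

End Defs.

(* Main.v *)
Require Import Defs.
From HB Require Import structures.
From mathcomp Require Import all_boot all_order all_algebra.
From mathcomp Require Import reals classical_sets.
From mathcomp Require Import ring lra.
Import Order.TTheory GRing.Theory Num.Theory.
Set Implicit Arguments. Unset Strict Implicit.
Local Open Scope ring_scope.

Lemma sum_ltS (V : zmodType) t (F : 'I_t.+1 -> V) (k : 'I_t.+1) :
  \sum_(i < t.+1 | (i < k.+1)%N) F i = \sum_(i < t.+1 | (i < k)%N) F i + F k.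
Proof.
rewrite (bigD1 k) //= addrC; congr (_ + _); apply: eq_bigl => i.
by rewrite ltnS andbC ltn_neqAle.
Qed.

Lemma bsumS (R : realType) t (b : 'I_t.+1 -> nat) (k : 'I_t.+1) :
  bsum R b k.+1 = bsum R b k + (b k)%:R.
Proof. by rewrite /bsum !natr_sum sum_ltS. Qed.

Lemma wptS (R : realType) t (b : 'I_t.+1 -> nat) (v : 'rV[R]_t.+1) (k : 'I_t.+1) :
  wpt b v k.+1 = wpt b v k - (b k)%:R * v ord0 k.
Proof. by rewrite /wpt sum_ltS opprD. Qed.

Lemma bsum0 (R : realType) t (b : 'I_t.+1 -> nat) : bsum R b 0 = 0.
Proof. by rewrite /bsum big_pred0. Qed.

Lemma wpt0 (R : realType) t (b : 'I_t.+1 -> nat) (v : 'rV[R]_t.+1) : wpt b v 0 = 0.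
Proof. by rewrite /wpt big_pred0 ?oppr0. Qed.

Lemma sum_all (V : zmodType) t (F : 'I_t.+1 -> V) :
  \sum_(i < t.+1 | (i < t.+1)%N) F i = \sum_(i < t.+1) F i.
Proof. by apply: eq_bigl => i; rewrite ltn_ord. Qed.

Lemma wpt_end (R : realType) t (b : 'I_t.+1 -> nat) (v : 'rV[R]_t.+1) :
  \sum_(i < t.+1) v ord0 i * (b i)%:R = 0 -> wpt b v t.+1 = 0.
Proof.
move=> h; rewrite /wpt sum_all.
rewrite (eq_bigr (fun i => v ord0 i * (b i)%:R)) ?h ?oppr0 // => i _.
by rewrite mulrC.
Qed.

Lemma bsum_ge0 (R : realType) t (b : 'I_t.+1 -> nat) k : 0 <= bsum R b k.
Proof. by rewrite /bsum ler0n. Qed.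

Lemma bsum_lt (R : realType) t (b : 'I_t.+1 -> nat) (hb : forall i, (0 < b i)%N)
  j k : (j < k)%N -> (k <= t.+1)%N -> bsum R b j + 1 <= bsum R b k.
Proof.
move=> hjk; elim: k hjk => // k IH hjk hk.
have hk' : (k < t.+1)%N by [].
have -> : k.+1 = (Ordinal hk').+1 by [].
rewrite bsumS /=.
have hb1 : 1 <= (b (Ordinal hk'))%:R :> R by rewrite ler1n hb.
move: hjk; rewrite ltnS leq_eqVlt => /orP [/eqP -> | hjk].
  by rewrite lerD2l.
have := IH hjk (ltnW hk'); have := bsum_ge0 R b k; lra.
Qed.

Lemma bsum_le (R : realType) t (b : 'I_t.+1 -> nat) (hb : forall i, (0 < b i)%N)
  j k : (j <= k)%N -> (k <= t.+1)%N -> bsum R b j <= bsum R b k.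
Proof.
rewrite leq_eqVlt => /orP [/eqP -> // | hjk] hk.
have := bsum_lt R hb hjk hk; lra.
Qed.

Lemma affine_maj (R : realType) t (b : 'I_t.+1 -> nat) (hb : forall i, (0 < b i)%N)
  (v : 'rV[R]_t.+1) (al be : R) :
  (forall j, (j <= t.+1)%N -> wpt b v j <= al + be * bsum R b j) ->
  majorizes_graph b v (fun x => al + be * x).
Proof.
move=> h k x h1 h2.
have bk0 : 0 < (b k)%:R :> R by rewrite ltr0n.
set lam := (x - bsum R b k) / (b k)%:R.
have hl : lam * (b k)%:R = x - bsum R b k by rewrite /lam divfK // gt_eqF.
have l0 : 0 <= lam by rewrite /lam divr_ge0 ?subr_ge0 // ltW.
have l1 : lam <= 1.
  rewrite /lam ler_pdivrMr // mul1r; rewrite bsumS in h2; lra.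
have e1 := h k (ltnW (ltn_ord k)).
have e2 := h k.+1 (ltn_ord k).
rewrite bsumS in e2.
have f1 : (1 - lam) * wpt b v k <= (1 - lam) * (al + be * bsum R b k).
  by apply: ler_wpM2l; rewrite ?subr_ge0.
have f2 : lam * wpt b v k.+1 <= lam * (al + be * (bsum R b k + (b k)%:R)).
  by apply: ler_wpM2l.
have hx : x = bsum R b k + lam * (b k)%:R by lra.
rewrite [X in _ <= _ + _ * X]hx; lra.
Qed.

Lemma affine_concave (R : realType) (a c al be : R) :
  concave_on a c (fun x => al + be * x).
Proof. move=> x y l *; lra. Qed.

Lemma sum_split_lt (V : zmodType) t (F : 'I_t.+1 -> V) (j : nat) :
  \sum_(i < t.+1) F i =
  \sum_(i < t.+1 | (i < j)%N) F i + \sum_(i < t.+1 | ~~ (i < j)%N) F i.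
Proof. by rewrite (bigID (fun i : 'I_t.+1 => (i < j)%N)) /=. Qed.

Lemma abs_le_S (R : realType) t (v : 'rV[R]_t.+1) i :
  `|v ord0 i| <= \sum_(k < t.+1) `|v ord0 k|.
Proof. by rewrite (bigD1 i) //= lerDl sumr_ge0. Qed.

Lemma wpt_le_left (R : realType) t (b : 'I_t.+1 -> nat) (v : 'rV[R]_t.+1) j :
  wpt b v j <= (\sum_(k < t.+1) `|v ord0 k|) * bsum R b j.
Proof.
rewrite /wpt /bsum natr_sum mulr_sumr -sumrN; apply: ler_sum => i _.
have h1 := abs_le_S v i.
have h2 : - v ord0 i <= `|v ord0 i| by rewrite -normrN ler_norm.
have h3 : (b i)%:R * (- v ord0 i) <= (b i)%:R * (\sum_(k < t.+1) `|v ord0 k|).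
  by apply: ler_wpM2l; [rewrite ler0n | lra].
lra.
Qed.

Lemma wpt_le_right (R : realType) t (b : 'I_t.+1 -> nat) (v : 'rV[R]_t.+1) j :
  \sum_(i < t.+1) v ord0 i * (b i)%:R = 0 ->
  wpt b v j <= (\sum_(k < t.+1) `|v ord0 k|) * (bsum R b t.+1 - bsum R b j).
Proof.
move=> hv.
have tot : \sum_(i < t.+1) (b i)%:R * v ord0 i = 0.
  by rewrite -[RHS]hv; apply: eq_bigr => i _; rewrite mulrC.
have ew : wpt b v j = \sum_(i < t.+1 | ~~ (i < j)%N) (b i)%:R * v ord0 i.
  rewrite /wpt; move: tot; rewrite (sum_split_lt _ j); lra.
have eb : bsum R b t.+1 - bsum R b j = \sum_(i < t.+1 | ~~ (i < j)%N) (b i)%:R.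
  rewrite /bsum !natr_sum sum_all (sum_split_lt _ j); lra.
rewrite ew eb mulr_sumr; apply: ler_sum => i _.
have h1 := abs_le_S v i.
have h2 : v ord0 i <= `|v ord0 i| by rewrite ler_norm.
have h3 : (b i)%:R * (v ord0 i) <= (b i)%:R * (\sum_(k < t.+1) `|v ord0 k|).
  by apply: ler_wpM2l; [rewrite ler0n | lra].
lra.
Qed.

Definition sl (R : realType) (f : R -> R) (x y : R) := (f y - f x) / (y - x).

Lemma div_le (R : realType) (x y a c : R) : 0 < a -> 0 < c -> x * c <= y * a -> x / a <= y / c.
Proof. by move=> ha hc h; rewrite ler_pdivrMr // mulrAC ler_pdivlMr. Qed.

Lemma threeK (R : realType) (c : R) (f : R -> R) p q r :
  concave_on 0 c f -> 0 <= p -> p < q -> q < r -> r <= c ->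
  (r - q) * f p + (q - p) * f r <= (r - p) * f q.
Proof.
move=> hc hp hpq hqr hr.
have rp : 0 < r - p by lra.
set l := (r - q) / (r - p).
have hl : l * (r - p) = r - q by rewrite /l divfK // gt_eqF.
have l0 : 0 <= l by rewrite /l; apply: divr_ge0; lra.
have l1 : l <= 1 by rewrite /l ler_pdivrMr // mul1r; lra.
have : l * f p + (1 - l) * f r <= f (l * p + (1 - l) * r) by apply: hc => //; lra.
have -> : l * p + (1 - l) * r = q by lra.
move=> H; have := ler_wpM2l (ltW rp) H.
have h1 : (r - p) * l = r - q by rewrite mulrC.
have h2 : (r - p) * (1 - l) = q - p by lra.
have e1 : (r - p) * (l * f p) = (r - q) * f p by rewrite mulrA h1.
have e2 : (r - p) * ((1 - l) * f r) = (q - p) * f r by rewrite mulrA h2.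
rewrite mulrDr e1 e2; lra.
Qed.

Lemma three_a (R : realType) (c : R) (f : R -> R) p q r :
  concave_on 0 c f -> 0 <= p -> p < q -> q < r -> r <= c -> sl f p r <= sl f p q.
Proof.
move=> hc hp hpq hqr hr; have K := threeK hc hp hpq hqr hr.
rewrite /sl; apply: div_le; lra.
Qed.

Lemma three_b (R : realType) (c : R) (f : R -> R) p q r :
  concave_on 0 c f -> 0 <= p -> p < q -> q < r -> r <= c -> sl f q r <= sl f p r.
Proof.
move=> hc hp hpq hqr hr; have K := threeK hc hp hpq hqr hr.
rewrite /sl; apply: div_le; lra.
Qed.

Lemma maj_ge (R : realType) t (b : 'I_t.+1 -> nat) (hb : forall i, (0 < b i)%N)
  (v : 'rV[R]_t.+1) (g : R -> R) :
  majorizes_graph b v g -> forall k, (k <= t.+1)%N -> wpt b v k <= g (bsum R b k).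
Proof.
move=> hm k; rewrite leq_eqVlt => /orP [/eqP -> | hk].
  have hS := bsumS R b (@ord_max t).
  have := hm ord_max (bsum R b t.+1).
  rewrite /= hS.
  have bk0 : 0 < (b ord_max)%:R :> R by rewrite ltr0n.
  have -> : bsum R b t + (b ord_max)%:R - bsum R b t = (b ord_max)%:R by ring.
  rewrite divff ?gt_eqF // mul1r; have -> : wpt b v t + (wpt b v t.+1 - wpt b v t) = wpt b v t.+1 by ring.
  move=> H; apply: H; rewrite ?lerDl ?ler0n //.
have := hm (Ordinal hk) (bsum R b k) (le_refl _) (bsum_le R hb (leqnSn k) hk).
by rewrite /= subrr !mul0r addr0.
Qed.

Lemma lb_fam (R : realType) t (b : 'I_t.+1 -> nat) (hb : forall i, (0 < b i)%N)
  (v : 'rV[R]_t.+1) (hv : \sum_(i < t.+1) v ord0 i * (b i)%:R = 0) (g : R -> R) x :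
  concave_on 0 (bsum R b t.+1) g -> majorizes_graph b v g ->
  0 <= x -> x <= bsum R b t.+1 -> 0 <= g x.
Proof.
move=> hc hm hx1 hx2.
set B := bsum R b t.+1.
have B0 : 0 < B by have := bsum_lt R hb (ltn0Sn t) (leqnn _); rewrite bsum0; lra.
have g0 : 0 <= g 0 by have := maj_ge hb hm (leq0n _); rewrite wpt0 bsum0.
have gB : 0 <= g B by have := maj_ge hb hm (leqnn _); rewrite wpt_end.
set l := (B - x) / B.
have l0 : 0 <= l by rewrite /l; apply: divr_ge0; lra.
have l1 : l <= 1 by rewrite /l ler_pdivrMr // mul1r; lra.
have hl : l * B = B - x by rewrite /l divfK // gt_eqF.
have : l * g 0 + (1 - l) * g B <= g (l * 0 + (1 - l) * B) by apply: hc => //; lra.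
have -> : l * 0 + (1 - l) * B = x by lra.
have h1 := mulr_ge0 l0 g0; have h2 : 0 <= (1 - l) * g B by apply: mulr_ge0; lra.
lra.
Qed.

Lemma exists_lcm (R : realType) t (b : 'I_t.+1 -> nat) (hb : forall i, (0 < b i)%N)
  (v : 'rV[R]_t.+1) (hv : \sum_(i < t.+1) v ord0 i * (b i)%:R = 0) :
  exists f : R -> R, least_concave_majorant b v f.
Proof.
set B := bsum R b t.+1.
pose P := fun g : R -> R => concave_on 0 B g /\ majorizes_graph b v g.
pose E := fun x : R => (fun y : R => exists g, P g /\ y = g x) : set R.
set S := \sum_(k < t.+1) `|v ord0 k|.
have Pg0 : P (fun x => 0 + S * x).
  split; first exact: affine_concave.
  apply: affine_maj => // j _; rewrite add0r; exact: wpt_le_left.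
have ne x : (E x !=set0)%classic by exists (0 + S * x); exists (fun x => 0 + S * x).
have le x g : 0 <= x -> x <= B -> P g -> inf (E x) <= g x.
  move=> hx1 hx2 Pg; apply: ge_inf; last by exists g.
  exists 0 => y [g' [[Pc Pm] ->]]; exact: (lb_fam hb hv Pc Pm hx1 hx2).
exists (fun x => inf (E x)); split.
- move=> x y l hx1 hx2 hy1 hy2 l0 l1; apply: lb_le_inf; first exact: ne.
  move=> z [g [Pg ->]].
  have := Pg.1 x y l hx1 hx2 hy1 hy2 l0 l1.
  have a := ler_wpM2l l0 (le x g hx1 hx2 Pg).
  have c : (1 - l) * inf (E y) <= (1 - l) * g y.
    by apply: ler_wpM2l; [lra | exact: le].
  lra.
- move=> k x h1 h2 /=; apply: lb_le_inf; first exact: ne.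
  move=> z [g [Pg ->]]; exact: Pg.2 k x h1 h2.
- move=> g cg mg x hx1 hx2 /=; exact: le.
Qed.

Lemma lcm_ends (R : realType) t (b : 'I_t.+1 -> nat) (hb : forall i, (0 < b i)%N)
  (v : 'rV[R]_t.+1) (hv : \sum_(i < t.+1) v ord0 i * (b i)%:R = 0) (f : R -> R) :
  least_concave_majorant b v f ->
  f (bsum R b 0) = 0 /\ f (bsum R b t.+1) = 0.
Proof.
move=> [hc hm hmin].
set B := bsum R b t.+1.
set S := \sum_(k < t.+1) `|v ord0 k|.
have B0 : 0 <= B by exact: bsum_ge0.
split.
  have h1 := maj_ge hb hm (leq0n _); rewrite wpt0 in h1.
  have hmaj : majorizes_graph b v (fun x => 0 + S * x).
    by apply: affine_maj => // j _; rewrite add0r; exact: wpt_le_left.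
  have h2 := hmin _ (@affine_concave R _ _ _ _) hmaj (bsum R b 0) (bsum_ge0 _ _ _) (bsum_le R hb (leq0n _) (leqnn _)).
  move: h1 h2 => /=; rewrite bsum0; lra.
have h1 := maj_ge hb hm (leqnn _); rewrite wpt_end // in h1.
have hmaj : majorizes_graph b v (fun x => S * B + (- S) * x).
  apply: affine_maj => // j _; have := @wpt_le_right R t b v j hv; rewrite -/B -/S; lra.
have h2 := hmin _ (@affine_concave R _ _ _ _) hmaj B B0 (le_refl _).
move: h2 => /=; lra.
Qed.

Lemma gamma_sl (R : realType) t (b : 'I_t.+1 -> nat) (f : R -> R) (i : 'I_t.+1) :
  Gamma_v b f ord0 i = - sl f (bsum R b i) (bsum R b i.+1).
Proof.
rewrite /Gamma_v mxE /sl bsumS.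
by rewrite [bsum R b i + _]addrC addrK mulNr.
Qed.

Lemma gamma_b (R : realType) t (b : 'I_t.+1 -> nat) (hb : forall i, (0 < b i)%N)
  (f : R -> R) (i : 'I_t.+1) :
  (b i)%:R * Gamma_v b f ord0 i = f (bsum R b i) - f (bsum R b i.+1).
Proof.
have bk0 : 0 < (b i)%:R :> R by rewrite ltr0n.
by rewrite /Gamma_v mxE mulrC divfK ?gt_eqF // opprB.
Qed.

Lemma chord_l (R : realType) (c : R) (f : R -> R) u p q :
  concave_on 0 c f -> 0 <= u -> u <= p -> p < q -> q <= c -> sl f p q <= sl f u q.
Proof.
move=> hc hu hup hpq hq; case: (eqVneq u p) => [-> // | hne].
have hup' : u < p by rewrite lt_neqAle hne hup.
exact: three_b hc hu hup' hpq hq.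
Qed.

Lemma chord_r (R : realType) (c : R) (f : R -> R) q r u :
  concave_on 0 c f -> 0 <= q -> q < r -> r <= u -> u <= c -> sl f q u <= sl f q r.
Proof.
move=> hc hq hqr hru hu; case: (eqVneq r u) => [-> // | hne].
have hru' : r < u by rewrite lt_neqAle hne hru.
exact: three_a hc hq hqr hru' hu.
Qed.

Lemma sl_mul (R : realType) (f : R -> R) x y : x != y -> sl f x y * (y - x) = f y - f x.
Proof. by move=> h; rewrite /sl divfK // subr_eq0 eq_sym. Qed.

Lemma gamma_cbar (R : realType) t (b : 'I_t.+1 -> nat) (hb : forall i, (0 < b i)%N)
  (f : R -> R) : concave_on 0 (bsum R b t.+1) f -> Cbar (Gamma_v b f).
Proof.
move=> hc i j; rewrite leq_eqVlt => /orP [/eqP /val_inj -> // | hij].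
rewrite !gamma_sl lerN2.
have h0 := bsum_ge0 R b i.
have e1 := bsum_lt R hb (ltnSn i) (ltn_ord i).
have e2 := bsum_lt R hb (ltnSn j) (ltn_ord j).
have e3 := bsum_lt R hb hij (ltnW (ltn_ord j)).
have e4 : (i.+1 <= j)%N by [].
have e5 := bsum_le R hb e4 (ltnW (ltn_ord j)).
have e6 := bsum_le R hb (ltn_ord j) (leqnn _).
have s1 : sl f (bsum R b i) (bsum R b j.+1) <= sl f (bsum R b i) (bsum R b i.+1).
  apply: three_a hc _ _ _ _ => //; lra.
have s2 : sl f (bsum R b j) (bsum R b j.+1) <= sl f (bsum R b i) (bsum R b j.+1).
  apply: three_b hc _ _ _ _ => //; lra.
exact: le_trans s2 s1.
Qed.

Lemma slack (R : realType) t (b : 'I_t.+1 -> nat) (hb : forall i, (0 < b i)%N)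
  (v : 'rV[R]_t.+1) (f : R -> R) :
  least_concave_majorant b v f -> forall k, (k < t)%N ->
  f (bsum R b k.+1) = wpt b v k.+1 \/
  Gamma_v b f ord0 (inord k) = Gamma_v b f ord0 (inord k.+1).
Proof.
move=> [hc hm hmin] k hk.
have hk1 : (k < t.+1)%N by apply: ltnW.
have hk2 : (k.+1 < t.+1)%N by [].
rewrite !gamma_sl !inordK //.
have hp := bsum_ge0 R b k.
have hpq := bsum_lt R hb (ltnSn k) hk1.
have hqr := bsum_lt R hb (ltnSn k.+1) hk2.
have hrB := bsum_le R hb hk2 (leqnn _).
have hs1 : sl f (bsum R b k.+1) (bsum R b k.+2) <= sl f (bsum R b k) (bsum R b k.+2).
  by apply: three_b hc _ _ _ _ => //; lra.
have hs2 : sl f (bsum R b k) (bsum R b k.+2) <= sl f (bsum R b k) (bsum R b k.+1).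
  by apply: three_a hc _ _ _ _ => //; lra.
case: (eqVneq (sl f (bsum R b k) (bsum R b k.+1)) (sl f (bsum R b k.+1) (bsum R b k.+2)))
  => [e | hne]; first by right; rewrite e.
have hlt : sl f (bsum R b k.+1) (bsum R b k.+2) < sl f (bsum R b k) (bsum R b k.+1).
  by rewrite lt_neqAle eq_sym hne /=; apply: le_trans hs1 hs2.
have hge := maj_ge hb hm (ltnW hk2).
case: (eqVneq (f (bsum R b k.+1)) (wpt b v k.+1)) => [e | hne2]; first by left.
exfalso.
have hgt : wpt b v k.+1 < f (bsum R b k.+1) by rewrite lt_neqAle eq_sym hne2.
set d1 := sl f (bsum R b k) (bsum R b k.+1) in hlt *.
set d2 := sl f (bsum R b k.+1) (bsum R b k.+2) in hlt *.
pose eps := Num.min (f (bsum R b k.+1) - wpt b v k.+1) ((d1 - d2) / 2).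
have eps0 : 0 < eps.
  have h1 : 0 < f (bsum R b k.+1) - wpt b v k.+1 by lra.
  have h2 : 0 < (d1 - d2) / 2 by lra.
  by rewrite lt_min; apply/andP; split; [exact: h1 | exact: h2].
have eps1 : eps <= f (bsum R b k.+1) - wpt b v k.+1 by rewrite ge_min lexx.
have eps2 : eps <= (d1 - d2) / 2 by rewrite ge_min lexx orbT.
pose s := (d1 + d2) / 2.
have hmaj : majorizes_graph b v (fun x => (f (bsum R b k.+1) - eps - s * (bsum R b k.+1)) + s * x).
  apply: affine_maj => // j hj.
  have u0 := bsum_ge0 R b j.
  have uB := bsum_le R hb hj (leqnn _).
  have wj := maj_ge hb hm hj.
  case: (ltngtP j k.+1) => hjk.
  - have hju := bsum_le R hb (hjk : (j <= k)%N) (ltnW hk1).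
    have hjq := bsum_lt R hb hjk (ltnW hk2).
    have c1 : d1 <= sl f (bsum R b j) (bsum R b k.+1).
      apply: chord_l hc _ _ _ _ => //; lra.
    have c2 := @sl_mul R f (bsum R b j) (bsum R b k.+1).
    have c3 : d1 * ((bsum R b k.+1) - bsum R b j) <= sl f (bsum R b j) (bsum R b k.+1) * ((bsum R b k.+1) - bsum R b j).
      by apply: ler_wpM2r => //; lra.
    have c4 : (d1 - d2) / 2 * 1 <= (d1 - d2) / 2 * ((bsum R b k.+1) - bsum R b j).
      by apply: ler_wpM2l; lra.
    rewrite c2 in c3; last by apply/eqP => h; lra.
    rewrite /s /=; lra.
  - have hru := bsum_le R hb (hjk : (k.+2 <= j)%N) hj.
    have hqu := bsum_lt R hb hjk hj.
    have c1 : sl f (bsum R b k.+1) (bsum R b j) <= d2.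
      by apply: chord_r hc _ _ _ _ => //; lra.
    have c2 := @sl_mul R f (bsum R b k.+1) (bsum R b j).
    have c3 : sl f (bsum R b k.+1) (bsum R b j) * (bsum R b j - (bsum R b k.+1)) <= d2 * (bsum R b j - (bsum R b k.+1)).
      by apply: ler_wpM2r => //; lra.
    have c4 : (d1 - d2) / 2 * 1 <= (d1 - d2) / 2 * (bsum R b j - (bsum R b k.+1)).
      by apply: ler_wpM2l; lra.
    rewrite c2 in c3; last by apply/eqP => h; lra.
    rewrite /s /=; lra.
  - rewrite hjk /=; lra.
have := hmin _ (@affine_concave R _ _ _ _) hmaj (bsum R b k.+1) _ _.
rewrite /=; move=> H; have := H (bsum_ge0 R b _) (bsum_le R hb (ltnW hk2) (leqnn _)); lra.
Qed.

Lemma abel (R : realType) n (g E : nat -> R) :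
  \sum_(i < n) g i * (E i - E i.+1) =
  g 0%N * E 0%N - g n * E n + \sum_(i < n) E i.+1 * (g i.+1 - g i).
Proof.
elim: n => [|n IH]; first by rewrite !big_ord0; lra.
rewrite !big_ord_recr /= IH; lra.
Qed.

Lemma wip_diff (R : realType) t (b : 'I_t.+1 -> nat) (hb : forall i, (0 < b i)%N)
  (v G : 'rV[R]_t.+1) (f : R -> R) :
  wip b G (Gamma_v b f) - wip b G v =
  \sum_(i < t.+1) G ord0 (inord i) *
     ((f (bsum R b i) - wpt b v i) - (f (bsum R b i.+1) - wpt b v i.+1)).
Proof.
rewrite /wip -sumrB; apply: eq_bigr => i _; rewrite inord_val wptS.
have h := gamma_b hb f i.
have h' : G ord0 i * ((b i)%:R * Gamma_v b f ord0 i) =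
          G ord0 i * (f (bsum R b i) - f (bsum R b i.+1)) by rewrite h.
lra.
Qed.

Lemma wip_ge0 (R : realType) t (b : 'I_t.+1 -> nat) (x : 'rV[R]_t.+1) : 0 <= wip b x x.
Proof.
apply: sumr_ge0 => i _; rewrite -mulrA mulr_ge0 ?ler0n // -expr2; exact: sqr_ge0.
Qed.

Lemma wip_gt0 (R : realType) t (b : 'I_t.+1 -> nat) (hb : forall i, (0 < b i)%N)
  (x : 'rV[R]_t.+1) : x != 0 -> 0 < wip b x x.
Proof.
move=> hx; rewrite lt_neqAle wip_ge0 andbT eq_sym; apply/negP => /eqP h.
move/negP: hx; apply; apply/eqP/rowP => i; rewrite mxE.
have hn : forall j : 'I_t.+1, true -> 0 <= (b j)%:R * x ord0 j * x ord0 j.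
  by move=> j _; rewrite -mulrA mulr_ge0 ?ler0n // -expr2; exact: sqr_ge0.
have := @psumr_eq0P R _ xpredT _ hn h i isT.
rewrite -mulrA => /eqP; rewrite mulf_eq0 pnatr_eq0 eqn0Ngt hb /= mulf_eq0 orbb.
by move/eqP.
Qed.

Lemma cauchy_schwarz (R : realType) t (b : 'I_t.+1 -> nat) (x y : 'rV[R]_t.+1) :
  0 < wip b x x -> 0 < wip b y y -> wip b x y <= wnorm b x * wnorm b y.
Proof.
move=> hx hy.
set a := wnorm b x; set c := wnorm b y.
have a0 : 0 < a by rewrite /a /wnorm sqrtr_gt0.
have c0 : 0 < c by rewrite /c /wnorm sqrtr_gt0.
have ea : a ^+ 2 = wip b x x by rewrite /a /wnorm sqr_sqrtr // ltW.
have ec : c ^+ 2 = wip b y y by rewrite /c /wnorm sqr_sqrtr // ltW.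
have key : \sum_(i < t.+1) (b i)%:R * (x ord0 i / a - y ord0 i / c) ^+ 2 =
   wip b x x / a ^+ 2 - 2 * (wip b x y / (a * c)) + wip b y y / c ^+ 2.
  rewrite /wip !mulr_suml mulr_sumr -sumrB -big_split /=.
  apply: eq_bigr => i _; field.
  by apply/andP; split; rewrite gt_eqF.
have pos : 0 <= \sum_(i < t.+1) (b i)%:R * (x ord0 i / a - y ord0 i / c) ^+ 2.
  by apply: sumr_ge0 => i _; rewrite mulr_ge0 ?ler0n ?sqr_ge0.
rewrite key -ea -ec !divff ?expf_neq0 ?gt_eqF // in pos.
have ac0 : 0 < a * c by rewrite mulr_gt0.
have : wip b x y / (a * c) <= 1 by lra.
by rewrite ler_pdivrMr // mul1r.
Qed.

Lemma gamma_ge (R : realType) t (b : 'I_t.+1 -> nat) (hb : forall i, (0 < b i)%N)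
  (v : 'rV[R]_t.+1) (hv : \sum_(i < t.+1) v ord0 i * (b i)%:R = 0) (f : R -> R)
  (H : least_concave_majorant b v f) (G : 'rV[R]_t.+1) :
  Cbar G -> wip b G v <= wip b G (Gamma_v b f).
Proof.
move=> cG; have [e0 eB] := lcm_ends hb hv H.
case: H => hc hm hmin.
rewrite -subr_ge0 wip_diff //.
rewrite (abel _ (fun k => G ord0 (inord k)) (fun k => f (bsum R b k) - wpt b v k)) /=.
rewrite e0 wpt0 wpt_end // eB !subrr !mulr0 subrr add0r.
apply: sumr_ge0 => i _.
have hi := ltn_ord i.
rewrite ltnS leq_eqVlt in hi; case/orP: hi => [/eqP -> | hi].
  by rewrite eB wpt_end // subrr mul0r.
apply: mulr_ge0; first by rewrite subr_ge0; exact: (@maj_ge R t b hb v f hm i.+1 (ltnW hi)).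
rewrite subr_ge0; apply: cG; rewrite !inordK //; exact: ltnW.
Qed.

Lemma gamma_eq (R : realType) t (b : 'I_t.+1 -> nat) (hb : forall i, (0 < b i)%N)
  (v : 'rV[R]_t.+1) (hv : \sum_(i < t.+1) v ord0 i * (b i)%:R = 0) (f : R -> R)
  (H : least_concave_majorant b v f) :
  wip b (Gamma_v b f) v = wip b (Gamma_v b f) (Gamma_v b f).
Proof.
have [e0 eB] := lcm_ends hb hv H.
apply/eqP; rewrite eq_sym -subr_eq0; apply/eqP.
rewrite wip_diff //.
rewrite (abel _ (fun k => Gamma_v b f ord0 (inord k)) (fun k => f (bsum R b k) - wpt b v k)) /=.
rewrite e0 wpt0 wpt_end // eB !subrr !mulr0 subrr add0r.
apply: big1 => i _.
have hi := ltn_ord i.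
rewrite ltnS leq_eqVlt in hi; case/orP: hi => [/eqP -> | hi].
  by rewrite eB wpt_end // subrr mul0r.
case: (slack hb H hi) => [-> | ->]; first by rewrite subrr mul0r.
by rewrite subrr mulr0.
Qed.

Theorem theorem2p2 (R : realType) (t : nat) (b : 'I_t.+1 -> nat)
  (v : 'rV[R]_t.+1)
  (hb : forall i, (0 < b i)%N)
  (hv0 : v != 0)
  (hvsum : \sum_(i < t.+1) v ord0 i * (b i)%:R = 0)
  (hpos : exists G : 'rV[R]_t.+1, [/\ Cbar G, G != 0 & 0 < mu b v G]) :
  (exists f : R -> R, least_concave_majorant b v f) /\
  forall f : R -> R, least_concave_majorant b v f ->
    [/\ Cbar (Gamma_v b f), Gamma_v b f != 0 &
        forall G : 'rV[R]_t.+1, Cbar G -> G != 0 ->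
          mu b v G <= mu b v (Gamma_v b f)].
Proof.
split; first exact: exists_lcm.
move=> f H.
have cb : Cbar (Gamma_v b f) by case: H => hc _ _; exact: gamma_cbar.
have nz : Gamma_v b f != 0.
  apply/negP => /eqP h0; case: hpos => G [cG _ muG].
  have := gamma_ge hb hvsum H cG.
  have -> : wip b G (Gamma_v b f) = 0.
    by rewrite h0 /wip big1 // => i _; rewrite mxE mulr0.
  move=> hle; move: muG; rewrite /mu; apply/negP; rewrite -leNgt.
  by apply: mulr_le0_ge0 => //; rewrite invr_ge0 /wnorm sqrtr_ge0.
split => // G cG G0.
have pG := wip_gt0 hb G0.
have pC := wip_gt0 hb nz.
have nG : 0 < wnorm b G by rewrite /wnorm sqrtr_gt0.
have nC : 0 < wnorm b (Gamma_v b f) by rewrite /wnorm sqrtr_gt0.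
have hC : wip b (Gamma_v b f) (Gamma_v b f) / wnorm b (Gamma_v b f) =
          wnorm b (Gamma_v b f).
  rewrite -{1}(sqr_sqrtr (ltW pC)) -/(wnorm b (Gamma_v b f)) expr2 mulfK //.
  by rewrite gt_eqF.
rewrite /mu (gamma_eq hb hvsum H) hC ler_pdivrMr //.
have := gamma_ge hb hvsum H cG.
have := cauchy_schwarz pG pC.
lra.
Qed.
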